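(* Let $(X,\mathcal{M},\mu)$ be a measure space with $0<\mu(X)<\infty$, and $\Phi$ an $N^*$-function for which there is a constant $k\ge2$ with $\Phi(kx)=2\Phi(x)$ for all $x>0$. Then for every $f\in L^1(X)$, $$\|f\|_\Phi\le\frac{1}{\mu(X)\,\Phi^{-1}\big(\frac{1}{\mu(X)}\big)}\,\|f\|_{L^1}.$$
   Context: An $N^*$-function is a function $\Phi:\mathbb{R}\to\mathbb{R}$ of the form $\Phi(x)=\int_0^{|x|}p(t)\,dt<+\infty$ for all $x$, where $p:[0,\infty)\to[0,\infty]$ is right-continuous, positive on $(0,\infty)$, non-increasing, and satisfies $\lim_{t\to0^+}p(t)=+\infty$ and $\lim_{t\to+\infty}p(t)=0$. $\Phi^{-1}$ is the inverse of $\Phi|_{[0,\infty)}$. $\|f\|_\Phi=\inf\{\lambda>0:\int_X\Phi(|f|/\lambda)\,d\mu\le1\}$. *)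

(* Defs.v *)
From HB Require Import structures.
From mathcomp Require Import all_boot all_order all_algebra.
From mathcomp Require Import all_classical all_reals all_analysis.
Set Implicit Arguments. Unset Strict Implicit. Unset Printing Implicit Defensive.
Import Order.TTheory GRing.Theory Num.Theory.
Import numFieldNormedType.Exports.
Local Open Scope classical_set_scope.
Local Open Scope ring_scope.

(* The density p : [0,oo) -> [0,+oo] of an N*-function (values outside
   [0,oo) are irrelevant). *)
Definition Nstar_density {R : realType} (p : R -> \bar R) : Prop :=
  (forall t, 0 <= t -> (0 <= p t)%E) /\
  [/\ 
      (forall t, 0 <= t -> (p x @[x --> t^'+] --> p t)),
      (forall t, 0 < t -> (0 < p t)%E),
      (forall s t, 0 <= s -> s <= t -> (p t <= p s)%E),
      (p x @[x --> 0^'+] --> +oo%E) &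
      (p x @[x --> +oo] --> 0%E)].

Definition Nstar_function {R : realType} (Phi : R -> R) : Prop :=
  exists p : R -> \bar R, Nstar_density p /\
    forall x : R,
      (\int[lebesgue_measure]_(t in `[0%R, `|x|%R]) p t)%E = (Phi x)%:E.

Definition Phi_inv {R : realType} (Phi : R -> R) (v : R) : R :=
  xget 0 [set x | 0 <= x /\ Phi x = v].

(* Luxemburg (Orlicz) norm, valued in \bar R (inf of empty set = +oo) *)
Definition orlicz_norm {d} {T : measurableType d} {R : realType}
  (mu : {measure set T -> \bar R}) (Phi : R -> R) (f : T -> R) : \bar R :=
  ereal_inf [set (l%:E) | l in [set l : R | 0 < l /\
     (\int[mu]_x (Phi (`|f x| / l))%:E <= 1)%E]].

(* Main.v *)
Require Import Defs.
From HB Require Import structures.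
From mathcomp Require Import all_boot all_order all_algebra.
From mathcomp Require Import all_classical all_reals all_analysis.
From mathcomp Require Import measurable_realfun.
From mathcomp Require Import lra ring.
Import Order.TTheory GRing.Theory Num.Theory.
Import numFieldNormedType.Exports.
Local Open Scope classical_set_scope.
Local Open Scope ring_scope.

Lemma p_meas (R : realType) (p : R -> \bar R) :
  (forall s t, 0 <= s -> s <= t -> (p t <= p s)%E) ->
  measurable_fun (`[0%R, +oo[%classic : set (measurableTypeR R)) p.
Proof.
move=> pni.
apply: (measurability (ErealGenCInfty.G (R:=R))).
  exact: ErealGenCInfty.measurableE.
move=> _ [_ [r ->] <-].
apply: (@is_interval_measurable R) => s t /= [s0 ps] [t0 pt] u /andP[su ut].
have {}s0 : 0 <= s by move: s0 => /andP[].
have {}pt : (r%:E <= p t)%E by move: pt => /andP[].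
have u0 : 0 <= u by apply: le_trans su.
split; apply/andP; split => //.
apply: le_trans pt _; exact: pni.
Qed.

Local Notation leb := (@lebesgue_measure _).

Lemma Phi_split (R : realType) (p : R -> \bar R) (Phi : R -> R)
  (hp : Nstar_density p)
  (hPhi : forall x : R, (\int[lebesgue_measure]_(t in `[0%R, `|x|%R]) p t)%E = (Phi x)%:E)
  (s u : R) : 0 <= s -> s <= u ->
  (Phi u)%:E = ((Phi s)%:E + \int[lebesgue_measure]_(t in `]s, u]) p t)%E.
Proof.
case: hp => p0 [_ _ pni _ _] s0 su.
rewrite -!hPhi !ger0_norm //; last exact: le_trans su.
rewrite (@itv_bndbnd_setU _ _ (BLeft 0) (BRight s) (BRight u)) //=; last first.
rewrite ge0_integral_setU //.
- apply: (measurable_funS _ _ (@p_meas _ _ pni)) => //.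
  move=> t /=; rewrite !in_itv /= => -[/andP[t0 _]|/andP[st _]]; rewrite andbT //.
  exact: le_trans (ltW st).
- move=> t /=; rewrite !in_itv /= => -[/andP[t0 _]|/andP[st _]]; apply: p0 => //.
  exact: le_trans (ltW st).
- apply: lt_disjoint => x y; rewrite !in_itv /= => /andP[_ xs] /andP[sy _].
  exact: le_lt_trans sy.
Qed.

Lemma leb_oc (R : realType) (s u : R) : s <= u ->
  lebesgue_measure (`]s, u] : set (measurableTypeR R)) = (u - s)%:E.
Proof.
move=> su; rewrite lebesgue_measure_itv /= lte_fin.
case: ltP => // us.
have -> : u = s by apply/le_anti; rewrite su us.
by rewrite subrr.
Qed.

Lemma int_oc_bounds (R : realType) (p : R -> \bar R) (hp : Nstar_density p)
  (s u : R) : 0 <= s -> s <= u ->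
  (p u * (u - s)%:E <= \int[lebesgue_measure]_(t in `]s, u]) p t)%E /\
  (\int[lebesgue_measure]_(t in `]s, u]) p t <= p s * (u - s)%:E)%E.
Proof.
case: hp => p0 [_ _ pni _ _] s0 su.
have sub : (`]s, u] : set (measurableTypeR R)) `<=` `[0%R, +oo[%classic.
  move=> t /=; rewrite !in_itv /= => /andP[st _]; rewrite andbT.
  exact: le_trans (ltW st).
have mp : measurable_fun (`]s, u] : set (measurableTypeR R)) p.
  exact: (measurable_funS _ sub (@p_meas _ _ pni)).
have tpos t : t \in `]s, u] -> 0 <= t.
  rewrite in_itv /= => /andP[st _]; exact: le_trans (ltW st).
rewrite -(@leb_oc _ _ _ su) -!integral_cst //; split.
- apply: ge0_le_integral => //.
  + move=> t _; apply: p0; exact: le_trans su.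
  + move=> t /= /andP[st tu]; apply: pni => //; exact: le_trans (ltW st).
- apply: ge0_le_integral => //.
  + move=> t /= /andP[st _]; apply: p0; exact: le_trans (ltW st).
  + move=> t /= /andP[st tu]; apply: pni => //; exact: ltW.
Qed.

Lemma Phi_ge0 (R : realType) (p : R -> \bar R) (Phi : R -> R)
  (hp : Nstar_density p)
  (hPhi : forall x : R, (\int[lebesgue_measure]_(t in `[0%R, `|x|%R]) p t)%E = (Phi x)%:E)
  (x : R) : 0 <= Phi x.
Proof.
case: hp => p0 _; rewrite -lee_fin -hPhi; apply: integral_ge0 => t /=.
rewrite in_itv /= => /andP[t0 _]; exact: p0.
Qed.

Lemma Phi_diff (R : realType) (p : R -> \bar R) (Phi : R -> R)
  (hp : Nstar_density p)
  (hPhi : forall x : R, (\int[lebesgue_measure]_(t in `[0%R, `|x|%R]) p t)%E = (Phi x)%:E)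
  (s u : R) : 0 <= s -> s <= u ->
  (\int[lebesgue_measure]_(t in `]s, u]) p t)%E = (Phi u - Phi s)%:E.
Proof.
move=> s0 su; rewrite EFinB (@Phi_split _ _ _ hp hPhi _ _ s0 su) addeAC subee // add0e. reflexivity.
Qed.

Lemma p_fin (R : realType) (p : R -> \bar R) (Phi : R -> R)
  (hp : Nstar_density p)
  (hPhi : forall x : R, (\int[lebesgue_measure]_(t in `[0%R, `|x|%R]) p t)%E = (Phi x)%:E)
  (t : R) : 0 < t -> p t \is a fin_num.
Proof.
move=> t0.
have [lo _] := @int_oc_bounds _ _ hp _ _ (lexx 0) (ltW t0).
rewrite (@Phi_diff _ _ _ hp hPhi _ _ (lexx 0) (ltW t0)) subr0 in lo.
have [p0 _] := hp.
have := p0 _ (ltW t0).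
case: (p t) lo => // lo _.
by rewrite gt0_mulye ?lte_fin ?subr0 // in lo.
Qed.

Lemma Phi_lower (R : realType) (p : R -> \bar R) (Phi : R -> R)
  (hp : Nstar_density p)
  (hPhi : forall x : R, (\int[lebesgue_measure]_(t in `[0%R, `|x|%R]) p t)%E = (Phi x)%:E)
  (s u : R) : 0 <= s -> s <= u -> 0 < u ->
  fine (p u) * (u - s) <= Phi u - Phi s.
Proof.
move=> s0 su u0.
have [lo _] := @int_oc_bounds _ _ hp _ _ s0 su.
rewrite (@Phi_diff _ _ _ hp hPhi _ _ s0 su) in lo.
by rewrite -lee_fin EFinM fineK // (@p_fin _ _ _ hp hPhi).
Qed.

Lemma Phi_upper (R : realType) (p : R -> \bar R) (Phi : R -> R)
  (hp : Nstar_density p)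
  (hPhi : forall x : R, (\int[lebesgue_measure]_(t in `[0%R, `|x|%R]) p t)%E = (Phi x)%:E)
  (s u : R) : 0 < s -> s <= u ->
  Phi u - Phi s <= fine (p s) * (u - s).
Proof.
move=> s0 su.
have [_ hi] := @int_oc_bounds _ _ hp _ _ (ltW s0) su.
rewrite (@Phi_diff _ _ _ hp hPhi _ _ (ltW s0) su) in hi.
by rewrite -lee_fin EFinM fineK // (@p_fin _ _ _ hp hPhi).
Qed.

Lemma P_ge0 (R : realType) (p : R -> \bar R) (hp : Nstar_density p) (t : R) :
  0 <= t -> 0 <= fine (p t).
Proof. by case: hp => p0 _ t0; apply: fine_ge0; exact: p0. Qed.

Lemma P_gt0 (R : realType) (p : R -> \bar R) (Phi : R -> R)
  (hp : Nstar_density p)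
  (hPhi : forall x : R, (\int[lebesgue_measure]_(t in `[0%R, `|x|%R]) p t)%E = (Phi x)%:E)
  (t : R) : 0 < t -> 0 < fine (p t).
Proof.
move=> t0; have pf := @p_fin _ _ _ hp hPhi _ t0.
case: hp => _ [_ ppos _ _ _].
by rewrite -lte_fin fineK //; exact: ppos.
Qed.

Lemma P_ni (R : realType) (p : R -> \bar R) (Phi : R -> R)
  (hp : Nstar_density p)
  (hPhi : forall x : R, (\int[lebesgue_measure]_(t in `[0%R, `|x|%R]) p t)%E = (Phi x)%:E)
  (s t : R) : 0 < s -> s <= t -> fine (p t) <= fine (p s).
Proof.
move=> s0 st.
have pfs := @p_fin _ _ _ hp hPhi _ s0.
have pft := @p_fin _ _ _ hp hPhi _ (lt_le_trans s0 st).
case: hp => _ [_ _ pni _ _].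
by rewrite -lee_fin !fineK //; apply: pni => //; exact: ltW.
Qed.

Lemma Phi_even (R : realType) (p : R -> \bar R) (Phi : R -> R)
  (hPhi : forall x : R, (\int[lebesgue_measure]_(t in `[0%R, `|x|%R]) p t)%E = (Phi x)%:E)
  (x : R) : Phi x = Phi `|x|.
Proof. by apply/EFin_inj; rewrite -!hPhi normr_id. Qed.

Lemma Phi_mono (R : realType) (p : R -> \bar R) (Phi : R -> R)
  (hp : Nstar_density p)
  (hPhi : forall x : R, (\int[lebesgue_measure]_(t in `[0%R, `|x|%R]) p t)%E = (Phi x)%:E)
  (s u : R) : 0 <= s -> s <= u -> Phi s <= Phi u.
Proof.
move=> s0 su; have [u0|u0] := eqVneq u 0.
  have -> : s = u by apply/le_anti; rewrite su u0 s0.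
  by [].
have u0' : 0 < u by rewrite lt_neqAle eq_sym u0 (le_trans s0 su).
have := @Phi_lower _ _ _ hp hPhi _ _ s0 su u0'.
move=> h; rewrite -subr_ge0; apply: le_trans h; apply: mulr_ge0; first exact: (@P_ge0 _ _ hp _ (ltW u0')).
by rewrite subr_ge0.
Qed.

Lemma Phi_pow_inv (R : realType) (Phi : R -> R) (k : R) (hk : 2 <= k)
  (hdelta : forall x : R, 0 < x -> Phi (k * x) = 2 * Phi x) (n : nat) :
  Phi ((k^-1) ^+ n) * 2 ^+ n = Phi 1.
Proof.
have k0 : 0 < k by apply: lt_le_trans hk.
elim: n => [|n IH]; first by rewrite !expr0 mulr1.
rewrite -IH.
have -> : (k^-1) ^+ n = k * (k^-1) ^+ n.+1.
  by rewrite exprS mulrA mulfV ?mul1r // gt_eqF.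
rewrite hdelta ?exprn_gt0 ?invr_gt0 // (exprS (2:R) n); ring.
Qed.

Lemma Phi_pow (R : realType) (Phi : R -> R) (k : R) (hk : 2 <= k)
  (hdelta : forall x : R, 0 < x -> Phi (k * x) = 2 * Phi x) (n : nat) :
  Phi (k ^+ n) = 2 ^+ n * Phi 1.
Proof.
have k0 : 0 < k by apply: lt_le_trans hk.
elim: n => [|n IH]; first by rewrite !expr0 mul1r.
by rewrite exprS hdelta ?exprn_gt0 // IH exprS mulrA.
Qed.

Lemma nat_le_pow2 (R : realType) (n : nat) : (n%:R : R) <= 2 ^+ n.
Proof.
have := ltn_expl n (isT : 1 < 2)%N.
by rewrite -(ltr_nat R) natrX => /ltW.
Qed.

Lemma Phi_small (R : realType) (p : R -> \bar R) (Phi : R -> R)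
  (hp : Nstar_density p)
  (hPhi : forall x : R, (\int[lebesgue_measure]_(t in `[0%R, `|x|%R]) p t)%E = (Phi x)%:E)
  (k : R) (hk : 2 <= k)
  (hdelta : forall x : R, 0 < x -> Phi (k * x) = 2 * Phi x) (e : R) :
  0 < e -> exists2 d, 0 < d & Phi d < e.
Proof.
move=> e0.
have k0 : 0 < k by apply: lt_le_trans hk.
have P10 := @Phi_ge0 _ _ _ hp hPhi 1.
set N := Num.bound (Phi 1 / e).
have hN : Phi 1 / e < N%:R by apply: archi_boundP; apply: divr_ge0 => //; exact: ltW.
exists ((k^-1) ^+ N); first by rewrite exprn_gt0 // invr_gt0.
have h := @Phi_pow_inv _ _ _ hk hdelta N.
have h2 := @nat_le_pow2 R N.
have p2 : 0 < (2:R) ^+ N by rewrite exprn_gt0.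
have : Phi 1 / e < 2 ^+ N by apply: lt_le_trans h2.
rewrite ltr_pdivrMr // -h => /(@lt_le_trans _ _ _ _ (e * 2 ^+ N)).
by rewrite [2 ^+ N * e]mulrC lexx ltr_pM2r //; apply.
Qed.

Lemma Phi0 (R : realType) (p : R -> \bar R) (Phi : R -> R)
  (hp : Nstar_density p)
  (hPhi : forall x : R, (\int[lebesgue_measure]_(t in `[0%R, `|x|%R]) p t)%E = (Phi x)%:E)
  (k : R) (hk : 2 <= k)
  (hdelta : forall x : R, 0 < x -> Phi (k * x) = 2 * Phi x) : Phi 0 = 0.
Proof.
apply/le_anti; rewrite (@Phi_ge0 _ _ _ hp hPhi 0) andbT.
rewrite leNgt; apply/negP => h.
have [d d0 hd] := @Phi_small _ _ _ hp hPhi _ hk hdelta _ h.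
have := @Phi_mono _ _ _ hp hPhi _ _ (lexx 0) (ltW d0).
by rewrite leNgt hd.
Qed.

Lemma Phi1_gt0 (R : realType) (p : R -> \bar R) (Phi : R -> R)
  (hp : Nstar_density p)
  (hPhi : forall x : R, (\int[lebesgue_measure]_(t in `[0%R, `|x|%R]) p t)%E = (Phi x)%:E)
  (k : R) (hk : 2 <= k)
  (hdelta : forall x : R, 0 < x -> Phi (k * x) = 2 * Phi x) : 0 < Phi 1.
Proof.
have := @Phi_lower _ _ _ hp hPhi 0 1 (lexx 0) ler01 ltr01.
rewrite (@Phi0 _ _ _ hp hPhi _ hk hdelta) !subr0 mulr1.
apply: lt_le_trans; exact: (@P_gt0 _ _ _ hp hPhi _ ltr01).
Qed.

Lemma Phi_big (R : realType) (p : R -> \bar R) (Phi : R -> R)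
  (hp : Nstar_density p)
  (hPhi : forall x : R, (\int[lebesgue_measure]_(t in `[0%R, `|x|%R]) p t)%E = (Phi x)%:E)
  (k : R) (hk : 2 <= k)
  (hdelta : forall x : R, 0 < x -> Phi (k * x) = 2 * Phi x) (M : R) :
  0 <= M -> exists2 b, 0 <= b & M <= Phi b.
Proof.
move=> M0.
have k0 : 0 < k by apply: lt_le_trans hk.
have P1 := @Phi1_gt0 _ _ _ hp hPhi _ hk hdelta.
set N := Num.bound (M / Phi 1).
have hN : M / Phi 1 < N%:R by apply: archi_boundP; apply: divr_ge0 => //; exact: ltW.
exists (k ^+ N); first by rewrite exprn_ge0 // ltW.
rewrite (@Phi_pow _ _ _ hk hdelta N).
have h2 := @nat_le_pow2 R N.
move: hN; rewrite ltr_pdivrMr // => /ltW /le_trans; apply.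
by rewrite ler_pM2r.
Qed.

Lemma Phi_lip (R : realType) (p : R -> \bar R) (Phi : R -> R)
  (hp : Nstar_density p)
  (hPhi : forall x : R, (\int[lebesgue_measure]_(t in `[0%R, `|x|%R]) p t)%E = (Phi x)%:E)
  (a r t : R) : 0 < a -> a <= r -> a <= t ->
  `|Phi r - Phi t| <= fine (p a) * `|r - t|.
Proof.
move=> a0 ar at_.
have gen : forall s u, a <= s -> s <= u -> `|Phi u - Phi s| <= fine (p a) * `|u - s|.
  move=> s u ase su.
  have s0 : 0 < s by apply: lt_le_trans ase.
  rewrite !ger0_norm ?subr_ge0 //; last exact: (@Phi_mono _ _ _ hp hPhi _ _ (ltW s0) su).
  apply: le_trans (@Phi_upper _ _ _ hp hPhi _ _ s0 su) _.
  apply: ler_wpM2r; first by rewrite subr_ge0.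
  exact: (@P_ni _ _ _ hp hPhi _ _ a0 ase).
have [tr|rt] := leP t r; first exact: gen.
by rewrite (distrC (Phi r)) (distrC r); apply: gen => //; exact: ltW.
Qed.

Lemma Phi_cont (R : realType) (p : R -> \bar R) (Phi : R -> R)
  (hp : Nstar_density p)
  (hPhi : forall x : R, (\int[lebesgue_measure]_(t in `[0%R, `|x|%R]) p t)%E = (Phi x)%:E)
  (k : R) (hk : 2 <= k)
  (hdelta : forall x : R, 0 < x -> Phi (k * x) = 2 * Phi x) : continuous Phi.
Proof.
move=> x; apply/cvgrPdist_lt => e e0; apply/nbhs_normP.
have Ph0 := @Phi0 _ _ _ hp hPhi _ hk hdelta.
have [->|x0] := eqVneq x 0.
  have [d d0 hd] := @Phi_small _ _ _ hp hPhi _ hk hdelta _ e0.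
  exists d => // y /=; rewrite sub0r normrN => yd.
  rewrite Ph0 sub0r normrN (@Phi_even _ _ _ hPhi y).
  rewrite ger0_norm; last exact: (@Phi_ge0 _ _ _ hp hPhi).
  apply: le_lt_trans hd.
  exact: (@Phi_mono _ _ _ hp hPhi _ _ (normr_ge0 y) (ltW yd)).
set r := `|x|.
have r0 : 0 < r by rewrite normr_gt0.
set c := fine (p (r / 2)).
have c0 : 0 <= c by apply: (@P_ge0 _ _ hp); rewrite divr_ge0 // ltW.
have r20 : 0 < r / 2 by rewrite divr_gt0.
exists (Num.min (r / 2) (e / (c + 1))).
  by rewrite /= lt_min r20 divr_gt0 // ltr_wpDl.
move=> y /=; rewrite lt_min => /andP[h1 h2].
have hd : `|r - `|y| | <= `|x - y| by apply: ler_dist_dist.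
rewrite (@Phi_even _ _ _ hPhi x) (@Phi_even _ _ _ hPhi y) -/r.
have ry : r / 2 <= `|y|.
  have : `|r - `|y| | < r / 2 by apply: le_lt_trans h1.
  rewrite ltr_norml => /andP[_]; lra.
apply: le_lt_trans (@Phi_lip _ _ _ hp hPhi _ _ _ r20 _ ry) _; first lra.
apply: (@le_lt_trans _ _ (c * (e / (c + 1)))).
  apply: ler_wpM2l => //; apply: ltW; apply: le_lt_trans hd h2.
rewrite mulrA ltr_pdivrMr; [nra|lra].
Qed.

Theorem mainTheorem11 (d : measure_display) (T : measurableType d) (R : realType)
  (mu : {measure set T -> \bar R})
  (hmu0 : (0 < mu setT)%E) (hmuoo : (mu setT < +oo)%E)
  (Phi : R -> R) (hPhi : Nstar_function Phi)
  (k : R) (hk : 2 <= k) (hdelta : forall x : R, 0 < x -> Phi (k * x) = 2 * Phi x)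
  (f : T -> R) (hfm : measurable_fun setT f)
  (hfi : mu.-integrable setT (EFin \o f)) :
  (orlicz_norm mu Phi f <=
     ((fine (mu setT) * Phi_inv Phi (fine (mu setT))^-1)^-1)%:E
     * \int[mu]_x (`|f x|)%:E)%E.
Proof.
case: hPhi => p [hp hP].
set m := fine (mu setT).
have mE : mu setT = m%:E by rewrite fineK // ge0_fin_numE // ltW.
have m0 : 0 < m by rewrite -lte_fin -mE.
have Ph0 := @Phi0 _ _ _ hp hP _ hk hdelta.
have cPhi := @Phi_cont _ _ _ hp hP _ hk hdelta.
have ex : exists x, [set x | 0 <= x /\ Phi x = m^-1] x.
  have mi0 : 0 < m^-1 by rewrite invr_gt0.
  have [b b0 hb] := @Phi_big _ _ _ hp hP _ hk hdelta (m^-1) (ltW mi0).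
  have [c cin hc] : exists2 c, c \in `[0, b] & Phi c = m^-1.
    apply: (@IVT _ Phi 0 b (m^-1) b0 (continuous_subspaceT cPhi)).
    rewrite Ph0.
    have -> : Num.min 0 (Phi b) = 0 by apply/min_idPl; exact: (@Phi_ge0 _ _ _ hp hP b).
    have -> : Num.max 0 (Phi b) = Phi b by apply/max_idPr; exact: (@Phi_ge0 _ _ _ hp hP b).
    by rewrite hb ltW.
  exists c; split; last exact: hc.
  by move: cin; rewrite in_itv /= => /andP[].
set a := Phi_inv Phi m^-1.
have [a0 Pa] : 0 <= a /\ Phi a = m^-1.
  rewrite /a /Phi_inv; exact: (xgetPex 0 ex).
have apos : 0 < a.
  rewrite lt_neqAle a0 andbT; apply/negP => /eqP a0'.
  by move: Pa; rewrite -a0' Ph0 => /esym/eqP; rewrite invr_eq0 gt_eqF.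
set q := fine (p a).
have q0 : 0 <= q by exact: (@P_ge0 _ _ hp _ a0).
set c0 := Phi a - q * a.
have c00 : 0 <= c0.
  have := @Phi_lower _ _ _ hp hP 0 a (lexx 0) a0 apos.
  rewrite Ph0 !subr0 /c0 subr_ge0 //.
have tang : forall y, 0 <= y -> Phi y <= c0 + q * y.
  move=> y y0; have [ya|ay] := leP y a.
    have := @Phi_lower _ _ _ hp hP y a y0 ya apos.
    rewrite /c0 -/q; nra.
  have := @Phi_upper _ _ _ hp hP a y apos (ltW ay).
  rewrite /c0 -/q; nra.
have [mf hfi'] := integrableP _ _ _ hfi.
have eI : (\int[mu]_x (`|f x|)%:E = \int[mu]_x `|(EFin \o f) x|)%E.
  by apply: eq_integral => x _; rewrite /comp abse_EFin.
have I0 : (0 <= \int[mu]_x (`|f x|)%:E)%E by apply: integral_ge0 => x _; rewrite lee_fin.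
set N := fine (\int[mu]_x (`|f x|)%:E).
have NE : (\int[mu]_x (`|f x|)%:E)%E = N%:E.
  by rewrite fineK // ge0_fin_numE // eI.
have N0 : 0 <= N by rewrite -lee_fin -NE.
have mfa : measurable_fun setT (fun x => `|f x|).
  by apply: measurableT_comp; [exact: normr_measurable | exact: hfm].
have claim : forall l, 0 < l -> N / (m * a) <= l ->
    (\int[mu]_x (Phi (`|f x| / l))%:E <= 1)%E.
  move=> l l0 hl.
  apply: (@le_trans _ _ (\int[mu]_x ((cst c0%:E) x + ((q / l) * `|f x|)%:E))%E).
    apply: ge0_le_integral => //.
    - move=> x _; rewrite lee_fin; exact: (@Phi_ge0 _ _ _ hp hP).
    - apply/measurable_EFinP; apply: measurableT_comp.
        exact: continuous_measurable_fun.
      by apply: measurable_funM => //; exact: measurable_cst.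
    - apply: emeasurable_funD; first exact: measurable_cst.
      apply/measurable_EFinP; apply: measurable_funM => //; exact: measurable_cst.
    - move=> x _; rewrite /= -EFinD lee_fin.
      have -> : q / l * `|f x| = q * (`|f x| / l) by ring.
      exact: (tang _ (divr_ge0 (normr_ge0 _) (ltW l0))).
  rewrite ge0_integralD //; last 2 first.
  - by move=> x _; rewrite lee_fin mulr_ge0 // divr_ge0 // ltW.
  - apply/measurable_EFinP; apply: measurable_funM => //; exact: measurable_cst.
  rewrite integral_cst // mE.
  under eq_integral do rewrite EFinM.
  rewrite ge0_integralZl_EFin //; last 2 first.
  - by apply/measurable_EFinP.
  - by rewrite divr_ge0 // ltW.
  rewrite NE -!EFinM -EFinD lee_fin.
  have ma0 : 0 < m * a by rewrite mulr_gt0.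
  have h2 : N / l <= m * a.
    by rewrite ler_pdivrMr // mulrC -ler_pdivrMr.
  have h3 : q * (N / l) <= q * (m * a) := ler_wpM2l q0 h2.
  have e1 : c0 * m = 1 - q * (m * a).
    rewrite /c0 Pa mulrBl mulVf ?gt_eqF //; ring.
  have e2 : q / l * N = q * (N / l) by ring.
  rewrite e1 e2; lra.
rewrite NE -EFinM.
have ma0 : 0 < m * a by rewrite mulr_gt0.
have L0 : 0 <= (m * a)^-1 * N by rewrite mulr_ge0 // invr_ge0 ltW.
apply/lee_addgt0Pr => eps eps0.
rewrite -EFinD; apply: ereal_inf_lbound.
exists ((m * a)^-1 * N + eps) => //.
have Lp : 0 < (m * a)^-1 * N + eps by lra.
split => //; apply: claim => //.
rewrite [N / _]mulrC; lra.
Qed.
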